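(* In the $q$-sphere setting of the context, with parameters $\alpha,\beta\in\mathbb C$, $\delta\in\mathbb R\setminus\{0\}$ satisfying $\delta^2\alpha^*=\beta q^2$, let $\mu=q\delta^{-2}$ and define the inner product on $\mathcal{S}$ by $\langle\!\langle\overline{x_+f^++x_-f^-},y_+f^++y_-f^-\rangle\!\rangle=h(x_+^*y_++\mu\,x_-^*y_-)$, where $h$ is the Haar state of $\mathbb{C}_q[SU_2]$. Then the operator $D(xf^++yf^-)=\alpha q^{-1}(\partial_+y)f^++\beta q(\partial_-x)f^-$ is hermitian: $\langle\!\langle\overline{D\psi},\phi\rangle\!\rangle=\langle\!\langle\overline{\psi},D\phi\rangle\!\rangle$ for all $\psi,\phi\in\mathcal{S}$.
   Context: $q$ is a real nonzero number. $\mathbb{C}_q[SU_2]$ is the $*$-algebra generated by $a,b,c,d$ with $ba=qab$, $ca=qac$, $db=qbd$, $dc=qcd$, $bc=cb$, $da-ad=(q-q^{-1})bc$, $ad-q^{-1}bc=1$, graded by $|a|=|c|=1$, $|b|=|d|=-1$. It carries Woronowicz's left-covariant 3-dimensional $*$-calculus $\Omega^1$, free as a left module with basis $e^0,e^+,e^-$ of degrees $0,2,-2$, with $e^0x=q^{2|x|}xe^0$, $e^\pm x=q^{|x|}xe^\pm$ for homogeneous $x$, and $(e^\pm)^*=-q^{\mp1}e^\mp$. Let $\pi:\Omega^1\to\Omega^1_{hor}$ be the left-module projection killing $e^0$, and write $\pi{\rm d}x=(\partial_+x)e^++(\partial_-x)e^-$. $\mathbb{C}_q[S^2]$ is the degree-0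 subalgebra. The spinor bimodule is $\mathcal S=\mathcal S_+\oplus\mathcal S_-$, $\mathcal S_\pm=\{xf^\pm: x\in\mathbb C_q[SU_2],|x|=\mp1\}$, where $f^\pm$ are formal symbols commuting with $\mathbb C_q[S^2]$. The Haar state $h:\mathbb C_q[SU_2]\to\mathbb C$ is the unique bi-invariant normalised positive linear functional. *)

(* Defs.v *)
(* Concrete model of C_q[SU_2] as the free algebra on
   a,b,c,d modulo the two-sided ideal of its relations; elements of the free
   algebra are represented by formal finite sums (lists of (coefficient, word)). *)
From HB Require Import structures.
From mathcomp Require Import all_boot all_order all_algebra.
Set Implicit Arguments. Unset Strict Implicit. Unset Printing Implicit Defensive.
Import Order.TTheory GRing.Theory Num.Theory.
Local Open Scope ring_scope.

Inductive gen := Ga | Gb | Gc | Gd.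
Definition gen_eqb (x y : gen) : bool :=
  match x, y with
  | Ga, Ga | Gb, Gb | Gc, Gc | Gd, Gd => true | _, _ => false end.
Lemma gen_eqP : Equality.axiom gen_eqb.
Proof. by case; case; constructor. Qed.
HB.instance Definition _ := hasDecEq.Build gen gen_eqP.

Definition word := seq gen.

Section FreeAlg.
Variable C : numClosedFieldType.

Definition poly := seq (C * word).

Definition coef (p : poly) (w : word) : C := \sum_(t <- p | t.2 == w) t.1.
Definition pone : poly := [:: (1, [::])].
Definition pgen (g : gen) : poly := [:: (1, [:: g])].
Definition pword (w : word) : poly := [:: (1, w)].
Definition padd (p r : poly) : poly := p ++ r.
Definition pscale (k : C) (p : poly) : poly := [seq (k * t.1, t.2) | t <- p].
Definition psub (p r : poly) : poly := p ++ pscale (-1) r.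
Definition pmul (p r : poly) : poly :=
  [seq (s.1 * t.1, s.2 ++ t.2) | s <- p, t <- r].

Variable q : C.

Definition rels : seq poly :=
  [:: psub (pword [:: Gb; Ga]) (pscale q (pword [:: Ga; Gb]));
      psub (pword [:: Gc; Ga]) (pscale q (pword [:: Ga; Gc]));
      psub (pword [:: Gd; Gb]) (pscale q (pword [:: Gb; Gd]));
      psub (pword [:: Gd; Gc]) (pscale q (pword [:: Gc; Gd]));
      psub (pword [:: Gb; Gc]) (pword [:: Gc; Gb]);
      psub (psub (pword [:: Gd; Ga]) (pword [:: Ga; Gd]))
           (pscale (q - q^-1) (pword [:: Gb; Gc]));
      psub (psub (pword [:: Ga; Gd]) (pscale q^-1 (pword [:: Gb; Gc]))) pone].

Definition inIdeal (p : poly) : Prop :=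
  exists l : seq (C * word * nat * word),
    forall w, coef p w =
      coef (flatten [seq pscale t.1.1.1
                       (pmul (pmul (pword t.1.1.2) (nth [::] rels t.1.2))
                             (pword t.2) ) | t <- l]) w.

Definition qeq (p r : poly) : Prop := inIdeal (psub p r).

Definition degg (g : gen) : int :=
  match g with Ga | Gc => 1 | Gb | Gd => -1 end.
Definition degw (w : word) : int := \sum_(g <- w) degg g.
Definition homog (p : poly) (n : int) : bool := all (fun t => degw t.2 == n) p.

Definition starg (g : gen) : poly :=
  match g with
  | Ga => pgen Gd | Gb => pscale (- q) (pgen Gc)
  | Gc => pscale (- q^-1) (pgen Gb) | Gd => pgen Ga end.
Definition starw (w : word) : poly :=
  foldr (fun g acc => pmul acc (starg g)) pone w.
Definition pstar (p : poly) : poly :=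
  flatten [seq pscale (t.1)^* (starw t.2) | t <- p].

(* coproduct on words: Delta t_ij = sum_k t_ik (x) t_kj, t = (a b; c d) *)
Definition splitg (g : gen) : seq (gen * gen) :=
  match g with
  | Ga => [:: (Ga, Ga); (Gb, Gc)]
  | Gb => [:: (Ga, Gb); (Gb, Gd)]
  | Gc => [:: (Gc, Ga); (Gd, Gc)]
  | Gd => [:: (Gc, Gb); (Gd, Gd)] end.
Fixpoint delta (w : word) : seq (word * word) :=
  match w with
  | [::] => [:: ([::], [::])]
  | g :: w' => [seq (s.1 :: t.1, s.2 :: t.2) | s <- splitg g, t <- delta w']
  end.

Definition hlin (hw : word -> C) (p : poly) : C := \sum_(t <- p) t.1 * hw t.2.

Definition IsHaar (hw : word -> C) : Prop :=
  [/\ forall p, inIdeal p -> hlin hw p = 0,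
      hw [::] = 1,
      forall w, qeq [seq (hw t.2, t.1) | t <- delta w] [:: (hw w, [::])],
      forall w, qeq [seq (hw t.1, t.2) | t <- delta w] [:: (hw w, [::])]
    & forall p, 0 <= hlin hw (pmul (pstar p) p)].

(* Woronowicz 3D calculus: da = a e0 + q^-1 b e+, db = a e- - q^-2 b e0,
   dc = c e0 + q^-1 d e+, dd = c e- - q^-2 d e0;
   with e^pm y = q^{|y|} y e^pm this gives the twisted Leibniz rule
   d_pm(x y) = q^{|y|} (d_pm x) y + x d_pm y. *)
Definition dplusg (g : gen) : poly :=
  match g with
  | Ga => pscale q^-1 (pgen Gb) | Gc => pscale q^-1 (pgen Gd)
  | Gb | Gd => [::] end.
Definition dminusg (g : gen) : poly :=
  match g with
  | Gb => pgen Ga | Gd => pgen Gc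
  | Ga | Gc => [::] end.
Fixpoint dword (D : gen -> poly) (w : word) : poly :=
  match w with
  | [::] => [::]
  | g :: w' => pmul (pscale (q ^ degw w') (D g)) (pword w') ++
               pmul (pgen g) (dword D w')
  end.
Definition dpoly (D : gen -> poly) (p : poly) : poly :=
  flatten [seq pscale t.1 (dword D t.2) | t <- p].
Definition dplus := dpoly dplusg.
Definition dminus := dpoly dminusg.

(* spinors x f^+ + y f^- represented by the pair (x, y), |x| = -1, |y| = 1 *)
Definition spinor := (poly * poly)%type.
Definition in_S (psi : spinor) : bool := homog psi.1 (-1) && homog psi.2 1.

Definition Dirac (al be : C) (psi : spinor) : spinor :=
  (pscale (al * q^-1) (dplus psi.2), pscale (be * q) (dminus psi.1)).

Definition inner (hw : word -> C) (mu : C) (psi phi : spinor) : C :=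
  hlin hw (pmul (pstar psi.1) phi.1 ++ pscale mu (pmul (pstar psi.2) phi.2)).

End FreeAlg.

(* Main.v *)
Require Import Defs.
From HB Require Import structures.
From mathcomp Require Import all_boot all_order all_algebra.
From mathcomp Require Import ring.
Set Implicit Arguments. Unset Strict Implicit. Unset Printing Implicit Defensive.
Import Order.TTheory GRing.Theory Num.Theory.
Local Open Scope ring_scope.

Lemma hlin_nil (C : numClosedFieldType) (G : word -> C) : hlin G [::] = 0.
Proof. by rewrite /hlin big_nil. Qed.
Lemma hlin_cons (C : numClosedFieldType) (G : word -> C) t p :
  hlin G (t :: p) = t.1 * G t.2 + hlin G p.
Proof. by rewrite /hlin big_cons. Qed.
Lemma hlin_cat (C : numClosedFieldType) (G : word -> C) p r :
  hlin G (p ++ r) = hlin G p + hlin G r.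
Proof. by rewrite /hlin big_cat. Qed.
Lemma hlin_scale (C : numClosedFieldType) (G : word -> C) k p :
  hlin G (pscale k p) = k * hlin G p.
Proof. rewrite /hlin /pscale big_map mulr_sumr; apply: eq_bigr => t _ /=; ring. Qed.
Lemma hlin_word (C : numClosedFieldType) (G : word -> C) w :
  hlin G (pword C w) = G w.
Proof. by rewrite /pword hlin_cons hlin_nil mul1r addr0. Qed.
Lemma hlin_ext (C : numClosedFieldType) (G G' : word -> C) p :
  G =1 G' -> hlin G p = hlin G' p.
Proof. by move=> e; apply: eq_bigr => t _; rewrite e. Qed.
Lemma hlin_mul (C : numClosedFieldType) (G : word -> C) p r :
  hlin G (pmul p r) = hlin (fun u => hlin (fun v => G (u ++ v)) r) p.
Proof.
rewrite /hlin /pmul big_allpairs_dep /=; apply: eq_bigr => s _.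
rewrite mulr_sumr; apply: eq_bigr => t _ /=; ring.
Qed.
Lemma hlin_sumG (C : numClosedFieldType) (I : Type) (l : seq I) (F : I -> word -> C) p :
  hlin (fun w => \sum_(i <- l) F i w) p = \sum_(i <- l) hlin (F i) p.
Proof.
rewrite /hlin exchange_big /=; apply: eq_bigr => t _; by rewrite mulr_sumr.
Qed.
Lemma hlin_scaleG (C : numClosedFieldType) (k : C) (G : word -> C) p :
  hlin (fun w => k * G w) p = k * hlin G p.
Proof. rewrite /hlin mulr_sumr; apply: eq_bigr => t _; ring. Qed.
Lemma hlin_addG (C : numClosedFieldType) (G G' : word -> C) p :
  hlin (fun w => G w + G' w) p = hlin G p + hlin G' p.
Proof. rewrite /hlin -big_split; apply: eq_bigr => t _ /=; ring. Qed.
Lemma hlin_0G (C : numClosedFieldType) p :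
  hlin (fun w : word => 0 : C) p = 0.
Proof. rewrite /hlin big1 // => t _; ring. Qed.
Lemma hlin_flat (C : numClosedFieldType) (T : Type) (l : seq T) (f : T -> C) F (G : word -> C) :
  hlin G (flatten [seq pscale (f t) (F t) | t <- l]) = \sum_(t <- l) f t * hlin G (F t).
Proof.
elim: l => [|t l IH] /=; first by rewrite hlin_nil big_nil.
by rewrite hlin_cat IH hlin_scale big_cons.
Qed.
Lemma hlin_coef_seq (C : numClosedFieldType) (G : word -> C) p (s : seq word) :
  uniq s -> {subset map snd p <= s} -> hlin G p = \sum_(w <- s) coef p w * G w.
Proof.
move=> us; elim: p => [|t p IH] sub.
  rewrite hlin_nil big1 // => w _; by rewrite /coef big_nil mul0r.
rewrite hlin_cons IH; last by move=> w wp; apply: sub; rewrite /= inE wp orbT.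
have ts : t.2 \in s by apply: sub; rewrite /= inE eqxx.
have cc : forall w, coef (t :: p) w = (if t.2 == w then t.1 else 0) + coef p w.
  by move=> w; rewrite /coef big_cons; case: ifP => _; rewrite ?add0r.
under [in RHS]eq_bigr => w _ do rewrite cc mulrDl.
rewrite big_split /=; congr (_ + _).
rewrite (bigD1_seq t.2) //= eqxx big1 ?addr0 // => w /negbTE; by rewrite eq_sym => ->; rewrite mul0r.
Qed.

Lemma hlin_coef (C : numClosedFieldType) (G : word -> C) p r :
  (forall w, coef p w = coef r w) -> hlin G p = hlin G r.
Proof.
move=> e; set s := undup (map snd (p ++ r)).
have us : uniq s by apply: undup_uniq.
rewrite (@hlin_coef_seq _ _ p s) ?(@hlin_coef_seq _ _ r s) //.
- by apply: eq_bigr => w _; rewrite e.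
- by move=> w wr; rewrite mem_undup map_cat mem_cat wr orbT.
- by move=> w wp; rewrite mem_undup map_cat mem_cat wp.
Qed.

Lemma hlin_psub (C : numClosedFieldType) (G : word -> C) p r :
  hlin G (psub p r) = hlin G p - hlin G r.
Proof. by rewrite /psub hlin_cat hlin_scale mulN1r. Qed.

Lemma hlin_ideal (C : numClosedFieldType) (q : C) (G : word -> C) p :
  (forall u i v, hlin G (pmul (pmul (pword C u) (nth [::] (rels q) i)) (pword C v)) = 0) ->
  inIdeal q p -> hlin G p = 0.
Proof.
move=> H [l e]; rewrite (hlin_coef G e) hlin_flat big1 // => t _.
by rewrite H mulr0.
Qed.

Lemma hlin_qeq (C : numClosedFieldType) (q : C) (G : word -> C) p r :
  (forall u i v, hlin G (pmul (pmul (pword C u) (nth [::] (rels q) i)) (pword C v)) = 0) ->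
  qeq q p r -> hlin G p = hlin G r.
Proof. move=> H /(hlin_ideal H); rewrite hlin_psub => /eqP; by rewrite subr_eq0 => /eqP. Qed.
Definition epsg (C : numClosedFieldType) (g : gen) : C :=
  match g with Ga | Gd => 1 | _ => 0 end.
Definition chig (C : numClosedFieldType) (q : C) (g : gen) : C :=
  match g with Ga => q | Gd => q^-1 | _ => 0 end.
Definition cq (C : numClosedFieldType) (q : C) (g : gen) : C :=
  match g with Ga | Gc => q | _ => q^-1 end.
Fixpoint wprod (C : numClosedFieldType) (f : gen -> C) (w : word) : C :=
  match w with [::] => 1 | g :: w' => f g * wprod f w' end.
Fixpoint Xw (C : numClosedFieldType) (q : C) (Xg : gen -> C) (w : word) : C :=
  match w with
  | [::] => 0
  | g :: w' => epsg C g * Xw q Xg w' + Xg g * wprod (chig q) w' end.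

Lemma delta_cons g w :
  delta (g :: w) = [seq (s.1 :: t.1, s.2 :: t.2) | s <- splitg g, t <- delta w].
Proof. by []. Qed.

Lemma delta_char (C : numClosedFieldType) (f c : gen -> C) :
  (forall g (F : gen -> C), \sum_(s <- splitg g) f s.2 * F s.1 = c g * F g) ->
  forall w (G : word -> C),
    \sum_(t <- delta w) wprod f t.2 * G t.1 = wprod c w * G w.
Proof.
move=> hg; elim=> [|g w IH] G.
  by rewrite /= big_cons big_nil /= addr0.
rewrite delta_cons big_allpairs_dep /=.
transitivity (\sum_(s <- splitg g) f s.2 * (wprod c w * G (s.1 :: w))).
  apply: eq_bigr => s _; rewrite -(IH (fun u => G (s.1 :: u))) mulr_sumr.
  by apply: eq_bigr => t _ /=; rewrite !mulrA.
by rewrite (hg g (fun h => wprod c w * G (h :: w))) mulrA.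
Qed.

Lemma degw_cons g w : degw (g :: w) = degg g + degw w.
Proof. by rewrite /degw big_cons. Qed.
Lemma degw_nil : degw [::] = 0.
Proof. by rewrite /degw big_nil. Qed.
Lemma degw_cat u v : degw (u ++ v) = degw u + degw v.
Proof. by rewrite /degw big_cat. Qed.

Lemma wprod_cq (C : numClosedFieldType) (q : C) : q != 0 ->
  forall w, wprod (cq q) w = q ^ degw w.
Proof.
move=> q0; elim=> [|g w IH] /=; first by rewrite degw_nil expr0z.
rewrite IH degw_cons expfzDr //; congr (_ * _).
by case: g => /=; rewrite ?expr1z ?exprN1.
Qed.

Lemma wprod_one (C : numClosedFieldType) w : wprod (fun _ => 1 : C) w = 1.
Proof. by elim: w => //= g w ->; rewrite mul1r. Qed.

Lemma delta_eps (C : numClosedFieldType) w (G : word -> C) :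
  \sum_(t <- delta w) wprod (@epsg C) t.2 * G t.1 = G w.
Proof.
rewrite (@delta_char C (@epsg C) (fun _ => 1)) ?wprod_one ?mul1r //.
move=> g F; case: g; rewrite !big_cons big_nil /=; ring.
Qed.

Lemma delta_chi (C : numClosedFieldType) (q : C) : q != 0 -> forall w (G : word -> C),
  \sum_(t <- delta w) wprod (chig q) t.2 * G t.1 = q ^ degw w * G w.
Proof.
move=> q0 w G; rewrite (@delta_char C (chig q) (cq q)) ?wprod_cq //.
move=> g F; case: g; rewrite !big_cons big_nil /=; ring.
Qed.

Lemma dword_cons (C : numClosedFieldType) (q : C) D g w :
  dword q D (g :: w) = pmul (pscale (q ^ degw w) (D g)) (pword C w) ++
                       pmul (pgen C g) (dword q D w).
Proof. by []. Qed.
Lemma dword_nil (C : numClosedFieldType) (q : C) D : dword q D [::] = [::].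
Proof. by []. Qed.

Lemma hlin_mulwr (C : numClosedFieldType) (G : word -> C) p v :
  hlin G (pmul p (pword C v)) = hlin (fun u => G (u ++ v)) p.
Proof. rewrite hlin_mul; apply: hlin_ext => u; by rewrite hlin_word. Qed.
Lemma hlin_mulwl (C : numClosedFieldType) (G : word -> C) p u :
  hlin G (pmul (pword C u) p) = hlin (fun v => G (u ++ v)) p.
Proof. by rewrite hlin_mul hlin_word. Qed.
Lemma hlin_mulgl (C : numClosedFieldType) (G : word -> C) p g :
  hlin G (pmul (pgen C g) p) = hlin (fun v => G (g :: v)) p.
Proof. exact: (hlin_mulwl G p [:: g]). Qed.

Lemma eps_split (C : numClosedFieldType) g (F : gen -> C) :
  \sum_(s <- splitg g) epsg C s.2 * F s.1 = F g.
Proof. case: g; rewrite !big_cons big_nil /=; ring. Qed.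

Lemma dword_delta (C : numClosedFieldType) (q : C) (D : gen -> Defs.poly C) (Xg : gen -> C) :
  q != 0 ->
  (forall g (G : word -> C), hlin G (D g) = \sum_(s <- splitg g) Xg s.2 * G [:: s.1]) ->
  forall w (G : word -> C),
    hlin G (dword q D w) = \sum_(t <- delta w) Xw q Xg t.2 * G t.1.
Proof.
move=> q0 hD; elim=> [|g w IH] G.
  by rewrite dword_nil hlin_nil /= big_cons big_nil /= mul0r addr0.
rewrite dword_cons hlin_cat hlin_mulwr hlin_scale hlin_mulgl.
rewrite (IH (fun v => G (g :: v))) hD.
rewrite delta_cons big_allpairs_dep /=.
under [in RHS]eq_bigr => s _ do
  (under eq_bigr => t _ do rewrite mulrDl -!mulrA; rewrite big_split /= -!mulr_sumr).
rewrite big_split /= addrC; congr (_ + _); last first.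
  by symmetry; exact: (eps_split g (fun h => \sum_(t <- delta w) Xw q Xg t.2 * G (h :: t.1))).
rewrite mulr_sumr; apply: eq_bigr => s _.
rewrite (delta_chi q0 w (fun u => G (s.1 :: u))) /=; ring.
Qed.
Lemma wprod_cat (C : numClosedFieldType) (f : gen -> C) u v :
  wprod f (u ++ v) = wprod f u * wprod f v.
Proof. elim: u => [|g u IH] /=; [by rewrite mul1r | by rewrite IH mulrA]. Qed.

Lemma Xw_cat (C : numClosedFieldType) (q : C) Xg u v :
  Xw q Xg (u ++ v) = wprod (@epsg C) u * Xw q Xg v + Xw q Xg u * wprod (chig q) v.
Proof.
elim: u => [|g u IH] /=; first by rewrite mul1r mul0r addr0.
rewrite IH wprod_cat; ring.
Qed.

Lemma Xw_ideal_split (C : numClosedFieldType) (q : C) Xg u r v :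
  hlin (Xw q Xg) (pmul (pmul (pword C u) r) (pword C v)) =
  wprod (@epsg C) u * Xw q Xg v * hlin (wprod (@epsg C)) r +
  wprod (@epsg C) u * wprod (chig q) v * hlin (Xw q Xg) r +
  Xw q Xg u * wprod (chig q) v * hlin (wprod (chig q)) r.
Proof.
rewrite hlin_mulwr hlin_mulwl /hlin !mulr_sumr -!big_split /=.
apply: eq_bigr => t _; rewrite !Xw_cat !wprod_cat; ring.
Qed.

Lemma Xw_kill (C : numClosedFieldType) (q : C) Xg :
  (forall i, hlin (wprod (@epsg C)) (nth [::] (rels q) i) = 0) ->
  (forall i, hlin (wprod (chig q)) (nth [::] (rels q) i) = 0) ->
  (forall i, hlin (Xw q Xg) (nth [::] (rels q) i) = 0) ->
  forall u i v, hlin (Xw q Xg) (pmul (pmul (pword C u) (nth [::] (rels q) i)) (pword C v)) = 0.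
Proof.
move=> h1 h2 h3 u i v; rewrite Xw_ideal_split h1 h2 h3; ring.
Qed.

Lemma Haar_dword (C : numClosedFieldType) (q : C) (hw : word -> C) D Xg :
  q != 0 -> IsHaar q hw ->
  (forall g (G : word -> C), hlin G (D g) = \sum_(s <- splitg g) Xg s.2 * G [:: s.1]) ->
  (forall u i v, hlin (Xw q Xg) (pmul (pmul (pword C u) (nth [::] (rels q) i)) (pword C v)) = 0) ->
  forall w, hlin hw (dword q D w) = 0.
Proof.
move=> q0 [_ _ _ H4 _] hD hK w.
rewrite (dword_delta q0 hD).
transitivity (hlin (Xw q Xg) [seq (hw t.1, t.2) | t <- delta w]).
  rewrite /hlin big_map; apply: eq_bigr => t _ /=; exact: mulrC.
by rewrite (hlin_qeq hK (H4 w)) hlin_cons hlin_nil /= mulr0 addr0.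
Qed.

Definition Xm (C : numClosedFieldType) (g : gen) : C := match g with Gb => 1 | _ => 0 end.
Definition Xp (C : numClosedFieldType) (q : C) (g : gen) : C := match g with Gc => q^-1 | _ => 0 end.

Ltac relcomp i :=
  do 8 (try (case: i => [|i])); rewrite /rels /= /hlin /psub /pscale /pword /pone /= ?big_cons ?big_nil /=.

Lemma rel_eps (C : numClosedFieldType) (q : C) : q != 0 -> forall i,
  hlin (wprod (@epsg C)) (nth [::] (rels q) i) = 0.
Proof. move=> q0 i; relcomp i; field; done. Qed.
Lemma rel_chi (C : numClosedFieldType) (q : C) : q != 0 -> forall i,
  hlin (wprod (chig q)) (nth [::] (rels q) i) = 0.
Proof. move=> q0 i; relcomp i; field; done. Qed.
Lemma rel_Xm (C : numClosedFieldType) (q : C) : q != 0 -> forall i,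
  hlin (Xw q (@Xm C)) (nth [::] (rels q) i) = 0.
Proof. move=> q0 i; relcomp i; field; done. Qed.
Lemma rel_Xp (C : numClosedFieldType) (q : C) : q != 0 -> forall i,
  hlin (Xw q (Xp q)) (nth [::] (rels q) i) = 0.
Proof. move=> q0 i; relcomp i; field; done. Qed.

Lemma gen_Xm (C : numClosedFieldType) (q : C) g (G : word -> C) :
  hlin G (dminusg C g) = \sum_(s <- splitg g) Xm C s.2 * G [:: s.1].
Proof. case: g; rewrite /= /hlin /pgen /= ?big_cons ?big_nil /=; ring. Qed.
Lemma gen_Xp (C : numClosedFieldType) (q : C) g (G : word -> C) :
  hlin G (dplusg q g) = \sum_(s <- splitg g) Xp q s.2 * G [:: s.1].
Proof. case: g; rewrite /= /hlin /pscale /pgen /= ?big_cons ?big_nil /=; ring. Qed.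

Lemma Haar_dminus (C : numClosedFieldType) (q : C) (hw : word -> C) :
  q != 0 -> IsHaar q hw -> forall w, hlin hw (dword q (dminusg C) w) = 0.
Proof.
move=> q0 H; apply: (Haar_dword q0 H (@gen_Xm C q)).
exact: Xw_kill (rel_eps q0) (rel_chi q0) (rel_Xm q0).
Qed.
Lemma Haar_dplus (C : numClosedFieldType) (q : C) (hw : word -> C) :
  q != 0 -> IsHaar q hw -> forall w, hlin hw (dword q (dplusg q) w) = 0.
Proof.
move=> q0 H; apply: (Haar_dword q0 H (@gen_Xp C q)).
exact: Xw_kill (rel_eps q0) (rel_chi q0) (rel_Xp q0).
Qed.
Lemma hlin_def (C : numClosedFieldType) (G : word -> C) p :
  hlin G p = \sum_(t <- p) t.1 * G t.2.
Proof. by []. Qed.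

Lemma hlin_swap (C : numClosedFieldType) (H : word -> word -> C) p r :
  hlin (fun x => hlin (fun y => H x y) r) p = hlin (fun y => hlin (fun x => H x y) p) r.
Proof.
rewrite !hlin_def.
under eq_bigr => s _ do rewrite hlin_def mulr_sumr.
rewrite exchange_big /=; apply: eq_bigr => t _.
rewrite hlin_def mulr_sumr; apply: eq_bigr => s _ /=; ring.
Qed.

Lemma pstar_cat (C : numClosedFieldType) (q : C) p r :
  pstar q (p ++ r) = pstar q p ++ pstar q r.
Proof. by rewrite /pstar map_cat flatten_cat. Qed.

Lemma hlin_pstar (C : numClosedFieldType) (q : C) (G : word -> C) p :
  hlin G (pstar q p) = \sum_(t <- p) t.1^* * hlin G (starw q t.2).
Proof. exact: hlin_flat. Qed.

Lemma hlin_dpoly (C : numClosedFieldType) (q : C) D (G : word -> C) p :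
  hlin G (dpoly q D p) = \sum_(t <- p) t.1 * hlin G (dword q D t.2).
Proof. exact: hlin_flat. Qed.

Lemma hlin_pstar_scale (C : numClosedFieldType) (q : C) (G : word -> C) k p :
  hlin G (pstar q (pscale k p)) = k^* * hlin G (pstar q p).
Proof.
rewrite !hlin_pstar /pscale big_map mulr_sumr; apply: eq_bigr => t _ /=.
by rewrite rmorphM mulrA.
Qed.

Lemma hlin_pstar_word (C : numClosedFieldType) (q : C) (G : word -> C) w :
  hlin G (pstar q (pword C w)) = hlin G (starw q w).
Proof. by rewrite hlin_pstar big_cons big_nil /= rmorph1 mul1r addr0. Qed.

Lemma starw_cons (C : numClosedFieldType) (q : C) g w :
  starw q (g :: w) = pmul (starw q w) (starg q g).
Proof. by []. Qed.

Lemma hlin_starw_cat (C : numClosedFieldType) (q : C) u v (G : word -> C) :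
  hlin G (starw q (u ++ v)) =
  hlin (fun x => hlin (fun y => G (x ++ y)) (starw q u)) (starw q v).
Proof.
elim: u G => [|g u IH] G.
  rewrite cat0s; apply: hlin_ext => x; rewrite /starw /= /pone hlin_cons hlin_nil mul1r addr0.
  by rewrite cats0.
rewrite cat_cons !starw_cons hlin_mul IH; apply: hlin_ext => x.
rewrite hlin_mul; apply: hlin_ext => y; apply: hlin_ext => z; by rewrite catA.
Qed.

Lemma hlin_pstar_mul (C : numClosedFieldType) (q : C) (G : word -> C) p r :
  hlin G (pstar q (pmul p r)) =
  hlin (fun x => hlin (fun y => G (x ++ y)) (pstar q p)) (pstar q r).
Proof.
rewrite hlin_pstar /pmul big_allpairs_dep /=.
rewrite hlin_pstar.
under [in RHS]eq_bigr => t _ do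
  rewrite (hlin_ext _ (fun x => hlin_pstar q (fun y => G (x ++ y)) p)) hlin_sumG.
under [in RHS]eq_bigr => t _ do rewrite mulr_sumr.
rewrite [in RHS]exchange_big /=; apply: eq_bigr => s _.
apply: eq_bigr => t _; rewrite hlin_starw_cat hlin_scaleG rmorphM; ring.
Qed.

Lemma hlin_dword_cat (C : numClosedFieldType) (q : C) D u v (G : word -> C) :
  q != 0 ->
  hlin G (dword q D (u ++ v)) =
  q ^ degw v * hlin (fun x => G (x ++ v)) (dword q D u) +
  hlin (fun x => G (u ++ x)) (dword q D v).
Proof.
move=> q0; elim: u G => [|g u IH] G.
  by rewrite cat0s dword_nil hlin_nil mulr0 add0r.
rewrite cat_cons dword_cons hlin_cat hlin_mulwr hlin_scale hlin_mulgl.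
rewrite (IH (fun x => G (g :: x))) dword_cons hlin_cat hlin_mulwr hlin_scale hlin_mulgl.
rewrite degw_cat expfzDr //.
have -> : hlin (fun u0 => G ((u0 ++ u) ++ v)) (D g) = hlin (fun u0 => G (u0 ++ u ++ v)) (D g).
  by apply: hlin_ext => x; rewrite catA.
ring.
Qed.

Lemma hlin_leibniz (C : numClosedFieldType) (q : C) D (n : int) p r (G : word -> C) :
  q != 0 -> all (fun t => degw t.2 == n) r ->
  hlin G (dpoly q D (pmul p r)) =
  q ^ n * hlin (fun x => hlin (fun y => G (x ++ y)) r) (dpoly q D p) +
  hlin (fun x => hlin (fun y => G (x ++ y)) (dpoly q D r)) p.
Proof.
move=> q0 /allP hr.
rewrite hlin_dpoly /pmul big_allpairs_dep /= hlin_swap.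
have E1 : hlin (fun y => hlin (fun x => G (x ++ y)) (dpoly q D p)) r =
   \sum_(s <- p) \sum_(t <- r) s.1 * t.1 * hlin (fun x => G (x ++ t.2)) (dword q D s.2).
  rewrite hlin_def; under eq_bigr => t _ do rewrite hlin_dpoly mulr_sumr.
  rewrite exchange_big /=; apply: eq_bigr => s _; apply: eq_bigr => t _; ring.
have E2 : hlin (fun x => hlin (fun y => G (x ++ y)) (dpoly q D r)) p =
   \sum_(s <- p) \sum_(t <- r) s.1 * t.1 * hlin (fun y => G (s.2 ++ y)) (dword q D t.2).
  rewrite hlin_def; apply: eq_bigr => s _; rewrite hlin_dpoly mulr_sumr.
  apply: eq_bigr => t _; ring.
rewrite E1 E2 mulr_sumr -big_split /=; apply: eq_bigr => s _.
rewrite mulr_sumr -big_split /= big_seq [in RHS]big_seq; apply: eq_bigr => t tr.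
rewrite hlin_dword_cat // (eqP (hr t tr)); ring.
Qed.
Lemma conj_qz (C : numClosedFieldType) (q : C) (n : int) :
  q != 0 -> q \is Num.real -> (q ^ n)^* = q ^ n.
Proof.
move=> q0 qr; have qu : q \is a GRing.unit by rewrite unitfE.
rewrite (rmorphXz _ n qu); congr (_ ^ _); exact: conj_Creal qr.
Qed.

Lemma starg_homog (C : numClosedFieldType) (q : C) g :
  all (fun t => degw t.2 == - degg g) (starg q g).
Proof. by case: g; rewrite /= /degw big_cons big_nil. Qed.

Lemma hlin_pstar_gen (C : numClosedFieldType) (q : C) (G : word -> C) g :
  hlin G (pstar q (pgen C g)) = hlin G (starg q g).
Proof.
rewrite (hlin_pstar_word q G [:: g]) starw_cons hlin_mul.
rewrite /starw /= /pone hlin_cons hlin_nil mul1r addr0 //.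
Qed.

Lemma star_deriv (C : numClosedFieldType) (q : C) D1 D2 (k : int) :
  q != 0 -> q \is Num.real ->
  (forall g (G : word -> C), hlin G (pstar q (D1 g)) =
      - q ^ (degg g + k) * hlin G (dpoly q D2 (starg q g))) ->
  forall w (G : word -> C), hlin G (pstar q (dword q D1 w)) =
      - q ^ (degw w + k) * hlin G (dpoly q D2 (starw q w)).
Proof.
move=> q0 qr hg; elim=> [|g w IH] G.
  by rewrite /= hlin_nil mulr0.
rewrite dword_cons pstar_cat hlin_cat !hlin_pstar_mul hlin_pstar_word.
rewrite (IH (fun x => hlin (fun y => G (x ++ y)) (pstar q (pgen C g)))).
rewrite (hlin_ext _ (fun x => hlin_pstar_gen q (fun y => G (x ++ y)) g)).
rewrite (hlin_ext _ (fun x => hlin_pstar_scale q (fun y => G (x ++ y)) _ (D1 g))).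
rewrite hlin_scaleG (hlin_ext _ (fun x => hg g (fun y => G (x ++ y)))) hlin_scaleG.
rewrite starw_cons (@hlin_leibniz _ q D2 (- degg g) (starw q w) (starg q g) G q0 (starg_homog q g)).
rewrite conj_qz //.
rewrite degw_cons !expfzDr // -?invr_expz ?expfz_neq0 //.
have h1 := expfz_neq0 (degg g) q0.
have h2 := expfz_neq0 (degw w) q0.
have h3 := expfz_neq0 k q0.
field; done.
Qed.
Lemma conj_qinv (C : numClosedFieldType) (q : C) :
  q != 0 -> q \is Num.real -> (q^-1)^* = q^-1.
Proof. move=> q0 qr; by rewrite -exprN1 conj_qz. Qed.

Lemma SDp (C : numClosedFieldType) (q : C) g (G : word -> C) :
  q != 0 -> q \is Num.real ->
  hlin G (pstar q (dplusg q g)) = - q ^ (degg g + (-1)) * hlin G (dpoly q (dminusg C) (starg q g)).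
Proof. move=> q0 qr; have cqi := conj_qinv q0 qr; case: g => /=;
  rewrite /pstar /starw /dpoly /= /pscale /pgen /pone /= /hlin /= ?big_cons ?big_nil /=;
  rewrite ?degw_nil ?subrr ?expr0z ?mulr1 ?cqi ?rmorphM ?rmorph1 ?cqi ?mulr0 //; field; done.
Qed.

Lemma SDm (C : numClosedFieldType) (q : C) g (G : word -> C) :
  q != 0 -> q \is Num.real ->
  hlin G (pstar q (dminusg C g)) = - q ^ (degg g + 1) * hlin G (dpoly q (dplusg q) (starg q g)).
Proof. move=> q0 qr; have cqi := conj_qinv q0 qr; case: g => /=;
  rewrite /pstar /starw /dpoly /= /pscale /pgen /pone /= /hlin /= ?big_cons ?big_nil /=;
  rewrite ?degw_nil ?addNr ?expr0z ?mulr1 ?cqi ?rmorphM ?rmorph1 ?cqi ?mulr0 //; field; done.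
Qed.
Lemma dpoly_cat (C : numClosedFieldType) (q : C) D p r :
  dpoly q D (p ++ r) = dpoly q D p ++ dpoly q D r.
Proof. by rewrite /dpoly map_cat flatten_cat. Qed.

Lemma hlin_dpoly_scale (C : numClosedFieldType) (q : C) D (G : word -> C) k p :
  hlin G (dpoly q D (pscale k p)) = k * hlin G (dpoly q D p).
Proof.
rewrite !hlin_dpoly /pscale big_map mulr_sumr; apply: eq_bigr => t _ /=; ring.
Qed.

Lemma hlin_pstar_flat (C : numClosedFieldType) (q : C) (T : Type) (l : seq T) f F (G : word -> C) :
  hlin G (pstar q (flatten [seq pscale (f t) (F t) | t <- l])) =
  \sum_(t <- l) (f t)^* * hlin G (pstar q (F t)).
Proof.
elim: l => [|t l IH] /=; first by rewrite big_nil /pstar /dpoly /= hlin_nil.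
by rewrite pstar_cat hlin_cat IH hlin_pstar_scale big_cons.
Qed.

Lemma hlin_dpoly_flat (C : numClosedFieldType) (q : C) D (T : Type) (l : seq T) f F (G : word -> C) :
  hlin G (dpoly q D (flatten [seq pscale (f t) (F t) | t <- l])) =
  \sum_(t <- l) f t * hlin G (dpoly q D (F t)).
Proof.
elim: l => [|t l IH] /=; first by rewrite big_nil /pstar /dpoly /= hlin_nil.
by rewrite dpoly_cat hlin_cat IH hlin_dpoly_scale big_cons.
Qed.

Lemma Kgen (C : numClosedFieldType) (q : C) (hw : word -> C) D1 D2 (k m n : int) y x :
  q != 0 -> q \is Num.real ->
  (forall g (G : word -> C), hlin G (pstar q (D1 g)) =
      - q ^ (degg g + k) * hlin G (dpoly q D2 (starg q g))) ->
  (forall w, hlin hw (dword q D2 w) = 0) ->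
  all (fun t => degw t.2 == m) y -> all (fun t => degw t.2 == n) x ->
  hlin hw (pmul (pstar q (dpoly q D1 y)) x) =
  q ^ (m + k) * q ^ (- n) * hlin hw (pmul (pstar q y) (dpoly q D2 x)).
Proof.
move=> q0 qr hg hz /allP hy hx.
have SD := star_deriv q0 qr hg.
have HZ : forall Z, hlin hw (dpoly q D2 Z) = 0.
  by move=> Z; rewrite hlin_dpoly big1 // => t _; rewrite hz mulr0.
set Gx := fun u => hlin (fun v => hw (u ++ v)) x.
have E1 : hlin hw (pmul (pstar q (dpoly q D1 y)) x) =
          - q ^ (m + k) * hlin Gx (dpoly q D2 (pstar q y)).
  rewrite hlin_mul -/Gx /dpoly hlin_pstar_flat /pstar hlin_dpoly_flat mulr_sumr.
  rewrite big_seq [in RHS]big_seq; apply: eq_bigr => t ty.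
  rewrite SD (eqP (hy t ty)); ring.
have E2 := @hlin_leibniz _ q D2 n (pstar q y) x hw q0 hx.
rewrite HZ -/Gx in E2.
rewrite E1 hlin_mul.
move: E2; set A := hlin Gx _; set B := hlin _ (pstar q y) => E2.
have -> : B = - (q ^ n * A) by apply/eqP; rewrite -addr_eq0 addrC -E2.
rewrite -invr_expz.
have h1 := expfz_neq0 n q0.
field; done.
Qed.
Lemma hlin_mul_pstar_scale (C : numClosedFieldType) (q : C) (G : word -> C) k p r :
  hlin G (pmul (pstar q (pscale k p)) r) = k^* * hlin G (pmul (pstar q p) r).
Proof. by rewrite !hlin_mul hlin_pstar_scale. Qed.

Lemma hlin_mul_scale_r (C : numClosedFieldType) (G : word -> C) k p r :
  hlin G (pmul p (pscale k r)) = k * hlin G (pmul p r).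
Proof.
rewrite !hlin_mul (hlin_ext _ (fun u => hlin_scale (fun v => G (u ++ v)) k r)).
by rewrite hlin_scaleG.
Qed.

Unset Implicit Arguments.
Set Strict Implicit.

Theorem mainTheorem7 (C : numClosedFieldType) (q al be de : C)
    (hw : word -> C) (psi phi : spinor C) :
  q \is Num.real -> q != 0 ->
  de \is Num.real -> de != 0 ->
  de ^+ 2 * al^* = be * q ^+ 2 ->
  IsHaar q hw ->
  in_S psi -> in_S phi ->
  let mu := q / de ^+ 2 in
  inner q hw mu (Dirac q al be psi) phi = inner q hw mu psi (Dirac q al be phi).
Proof.
move=> qr q0 dr d0 hab H.
case: psi => x y; case: phi => x' y' /andP[hx hy] /andP[hx' hy'] mu.
rewrite /inner /Dirac /= !hlin_cat !hlin_scale.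
rewrite !hlin_mul_pstar_scale !hlin_mul_scale_r /dplus /dminus.
have K1 := @Kgen C q hw (dplusg q) (dminusg C) (-1) 1 (-1) y x' q0 qr
   (fun g G => SDp g G q0 qr) (Haar_dminus q0 H) hy hx'.
have K2 := @Kgen C q hw (dminusg C) (dplusg q) 1 (-1) 1 x y' q0 qr
   (fun g G => SDm g G q0 qr) (Haar_dplus q0 H) hx hy'.
rewrite K1 K2 addrN addNr expr0z opprK expr1z exprN1 !mul1r.
have cqi := conj_qinv q0 qr.
have hab2 : de ^+ 2 * al = be^* * q ^+ 2.
  have cM : forall z w : C, (z * w)^* = z^* * w^* by move=> z w; exact: rmorphM.
  have cX : forall z : C, (z ^+ 2)^* = z^* ^+ 2 by move=> z; exact: rmorphXn.
  have cK : forall z : C, z^*^* = z by move=> z; exact: conjCK.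
  have e : (de ^+ 2 * al^*)^* = (be * q ^+ 2)^* by rewrite hab.
  by move: e; rewrite !cM cK (conj_Creal qr) (conj_Creal dr) !expr2.
have cM : forall z w : C, (z * w)^* = z^* * w^* by move=> z w; exact: rmorphM.
rewrite !cM cqi (conj_Creal qr).
have ha : al^* = be * q ^+ 2 / de ^+ 2.
  by rewrite -hab mulrC mulrA mulVf ?mul1r // expf_neq0.
have hb : be^* = de ^+ 2 * al / q ^+ 2.
  by rewrite hab2 mulfK // expf_neq0.
rewrite ha hb /mu.
field.
by rewrite d0 q0.
Qed.
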